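(* Let $(X,T)$ be a minimal topological dynamical system whose proximal relation ${\bf P}(X,T)$ is closed in $X\times X$, and let $d\in\mathbb{N}$. Then the maximal distal factor of $(N_d(X,T),\mathcal{G}_d(T))$ is $(N_d(X_{dis},T),\mathcal{G}_d(T))$, where $X_{dis}$ is the maximal distal factor of $(X,T)$ (the factor map being the restriction of $\pi\times\cdots\times\pi$, $\pi:X\to X_{dis}$).
   Context: ${\bf P}(X,T)=\{(x,y)\in X^2:\liminf_{n\in\mathbb{Z}}\rho(T^nx,T^ny)=0\}$. $\sigma_d(T)=T\times\cdots\times T$, $\tau_d(T)=T\times T^2\times\cdots\times T^d$ on $X^d$, $\mathcal{G}_d(T)=\langle\sigma_d(T),\tau_d(T)\rangle$, $N_d(X,T)=\overline{\{(T^{p+q}x,\dots,T^{p+dq}x):x\in X,p,q\in\mathbb{Z}\}}$. A system is distal if its proximal relation is the diagonal; the maximal distal factor is the largest distal factor. *)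

(* Defs.v *)
From HB Require Import structures.
From mathcomp Require Import all_boot all_order all_algebra.
From mathcomp Require Import all_classical all_reals all_analysis.
Unset Printing Implicit Defensive.
Import Order.TTheory GRing.Theory Num.Theory.
Local Open Scope classical_set_scope.
Local Open Scope ring_scope.

Section Defs.
Context {R : realType}.

(** integer iterates of an invertible map [f] with inverse [finv]:
    T^n for n >= 0 is [iter n f], T^(-(k+1)) is [iter k.+1 finv] *)
Definition iterz {X : Type} (f finv : X -> X) (n : int) : X -> X :=
  match n with
  | Posz k => iter k f
  | Negz k => iter k.+1 finv
  end.

Definition zact {X : Type} (T Tinv : X -> X) : int -> X -> X := iterz T Tinv.

(** The proximal relation P(X,T) of a Z-system, literally:
    liminf_{n in Z} rho(T^n x, T^n y) = 0, i.e. for every e > 0 and every N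
    there is n with |n| >= N and rho(T^n x, T^n y) < e. *)
Definition proxrel {X : pseudoMetricType R} (T Tinv : X -> X) : set (X * X) :=
  [set xy | forall (e : R) (N : nat), 0 < e ->
     exists n : int, (N <= `|n|)%N /\ ball (iterz T Tinv n xy.1) e (iterz T Tinv n xy.2)].

Definition minimal_sys {X : topologicalType} (T : X -> X) :=
  forall A : set X, closed A -> A !=set0 -> T @` A = A -> A = setT.

(** General group actions  act : G -> Y -> Y  restricted to a subset A of Y
    (the phase space of the system is the subspace A). *)

Definition proximal {G : Type} {Y : pseudoMetricType R}
  (act : G -> Y -> Y) (x y : Y) :=
  forall e : R, 0 < e -> exists g : G, ball (act g x) e (act g y).

Definition system_on {G : Type} {Y : pseudoMetricType R}
  (act : G -> Y -> Y) (A : set Y) :=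
  [/\ hausdorff_space Y, compact A,
      forall g, {within A, continuous (act g)} &
      forall g, act g @` A `<=` A].

Definition distal_on {G : Type} {Y : pseudoMetricType R}
  (act : G -> Y -> Y) (A : set Y) :=
  forall x y, A x -> A y -> proximal act x y -> x = y.

Definition factor_map {G : Type} {Y Z : pseudoMetricType R}
  (actY : G -> Y -> Y) (A : set Y) (actZ : G -> Z -> Z) (B : set Z)
  (f : Y -> Z) :=
  [/\ {within A, continuous f}, f @` A = B &
      forall g x, A x -> f (actY g x) = actZ g (f x)].

Definition max_distal_factor {G : Type} {Y Z : pseudoMetricType R}
  (actY : G -> Y -> Y) (A : set Y) (actZ : G -> Z -> Z) (B : set Z)
  (f : Y -> Z) :=
  [/\ system_on actZ B, factor_map actY A actZ B f, distal_on actZ B &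
      forall (W : pseudoMetricType R) (actW : G -> W -> W) (C : set W)
             (h : Y -> W),
        system_on actW C -> factor_map actY A actW C h -> distal_on actW C ->
        exists k : Z -> W,
          factor_map actZ B actW C k /\ forall x, A x -> h x = k (f x)].

(** X^d, with the max (sup) metric over the d coordinates *)
Definition powd (X : pseudoMetricType R) (d : nat) : pseudoMetricType R :=
  arrow_uniform_type 'I_d X.

(** sigma_d(T) = T x ... x T,  tau_d(T) = T x T^2 x ... x T^d
    (coordinate i : 'I_d is the (i+1)-th coordinate) *)
Definition sigma_d {X : pseudoMetricType R} (d : nat) (T : X -> X)
  : powd X d -> powd X d := fun x i => T (x i).
Definition tau_d {X : pseudoMetricType R} (d : nat) (T : X -> X)
  : powd X d -> powd X d := fun x i => iter i.+1 T (x i).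

(** the action of G_d(T) = <sigma_d(T), tau_d(T)> (sigma and tau commute,
    so every element is sigma^p tau^q) *)
Definition gd_act {X : pseudoMetricType R} (d : nat) (T Tinv : X -> X)
  : int * int -> powd X d -> powd X d :=
  fun pq => iterz (sigma_d d T) (sigma_d d Tinv) pq.1
            \o iterz (tau_d d T) (tau_d d Tinv) pq.2.

Definition Nd {X : pseudoMetricType R} (d : nat) (T Tinv : X -> X)
  : set (powd X d) :=
  closure [set y : powd X d | exists (x : X) (p q : int),
                      y = (fun i : 'I_d => iterz T Tinv (p + (i.+1)%:Z * q) x)].

Definition powmap {X Y : pseudoMetricType R} (d : nat) (pi : X -> Y)
  : powd X d -> powd Y d := fun x i => pi (x i).

End Defs.

(* Main.v *)
Require Import Defs.
From HB Require Import structures.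
From mathcomp Require Import all_boot all_order all_algebra.
From mathcomp Require Import all_classical all_reals all_analysis.
Import Order.TTheory GRing.Theory Num.Theory.
Local Open Scope classical_set_scope.
Local Open Scope ring_scope.
From mathcomp Require Import zify ring lra.
Set Implicit Arguments.
Unset Strict Implicit.

Section IterZ.
Context {X : Type} (f g : X -> X) (fK : cancel f g) (gK : cancel g f).

Lemma iterz0 x : iterz f g 0 x = x. Proof. by []. Qed.

Lemma iterzS n x : iterz f g (1 + n) x = f (iterz f g n x).
Proof.
case: n => [k|k] /=.
  by rewrite add0n.
case: k => [|k].
  by rewrite gK.
have -> : (1 + Negz k.+1 = Negz k)%R.
  by rewrite !NegzE; lia.
by rewrite gK.
Qed.

Lemma iterzN1 n x : iterz f g (-1 + n) x = g (iterz f g n x).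
Proof.
have := iterzS (-1 + n) x; rewrite addrA subrr add0r => ->.
by rewrite fK.
Qed.

Lemma iterzD m n x : iterz f g (m + n) x = iterz f g m (iterz f g n x).
Proof.
case: m => [k|k].
  elim: k => [|k IH]; first by rewrite add0r.
  have -> : (Posz k.+1 + n = 1 + (Posz k + n))%R by lia.
  by rewrite iterzS IH -iterzS; congr iterz; lia.
elim: k => [|k IH].
  by rewrite iterzN1.
have -> : (Negz k.+1 + n = -1 + (Negz k + n))%R by rewrite !NegzE; lia.
by rewrite iterzN1 IH -iterzN1; congr iterz; rewrite !NegzE; lia.
Qed.

Lemma iterz_comm {Y : Type} (f' g' : Y -> Y) (phi : X -> Y) :
  (forall x, phi (f x) = f' (phi x)) -> (forall x, phi (g x) = g' (phi x)) ->
  forall n x, phi (iterz f g n x) = iterz f' g' n (phi x).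
Proof.
move=> hf hg [k|k] x /=.
  by elim: k => [|k IH] //=; rewrite hf IH.
elim: k => [|k IH] /=; first by rewrite hg.
by rewrite hg IH.
Qed.

End IterZ.

Lemma iterz_mul {X : Type} (f g : X -> X) (fK : cancel f g) (gK : cancel g f)
  (a q : int) x :
  iterz (iterz f g a) (iterz f g (- a)) q x = iterz f g (q * a) x.
Proof.
set F := iterz f g a; set G := iterz f g (- a).
case: q => [k|k].
  elim: k => [|k IH]; first by rewrite mul0r.
  have -> : iterz F G k.+1 x = F (iterz F G k x) by [].
  by rewrite IH /F -iterzD //; congr iterz; lia.
elim: k => [|k IH].
  by rewrite /= /G NegzE; congr iterz; lia.
have -> : iterz F G (Negz k.+1) x = G (iterz F G (Negz k) x) by [].
by rewrite IH /G -iterzD //; congr iterz; rewrite !NegzE; lia.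
Qed.
Section Topo.
Context {R : realType}.

Lemma ball_eq {M : pseudoMetricType R} (hM : hausdorff_space M) (x y : M) :
  (forall e : R, 0 < e -> ball x e y) -> x = y.
Proof.
move=> H; apply: close_eq => //; rewrite ball_close => e; exact: H.
Qed.

Lemma closure_ballP {M : pseudoMetricType R} (A : set M) p :
  closure A p <-> forall e : R, 0 < e -> exists a, A a /\ ball p e a.
Proof.
split.
  move=> cA e e0; have [a [Aa Ba]] := cA _ (nbhsx_ballx p _ e0).
  by exists a.
move=> H B /nbhs_ex [d Hd].
have [a [Aa Ba]] := H d%:num (gt0 d); exists a; split => //; exact: Hd.
Qed.

Lemma cont_ball {M N : pseudoMetricType R} (f : M -> N) x :
  {for x, continuous f} ->
  forall e : R, 0 < e -> exists2 d : R, 0 < d &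
    forall y, ball x d y -> ball (f x) e (f y).
Proof.
move=> cf e e0.
have : nbhs x (f @^-1` ball (f x) e) by apply: cf; exact: nbhsx_ballx.
by move/nbhs_ex => [d Hd]; exists d%:num.
Qed.

Lemma cluster_family {Y : topologicalType} (K : set Y) (A : R -> set Y) :
  compact K -> (forall e, 0 < e -> A e `<=` K) ->
  (forall e, 0 < e -> A e !=set0) ->
  (forall e1 e2, 0 < e1 -> e1 <= e2 -> A e1 `<=` A e2) ->
  exists p, K p /\ forall e, 0 < e -> closure (A e) p.
Proof.
move=> cK AK An Amono.
pose F := filter_from [set e : R | 0 < e] A.
have FF : Filter F.
  apply: filter_from_filter; first by exists 1 => /=; exact: ltr01.
  move=> i j /= i0 j0.
  have m0 : 0 < Order.min i j by rewrite lt_min i0 j0.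
  exists (Order.min i j) => //.
  move=> y Ay; split.
    by apply: (Amono (Order.min i j) i m0 _) Ay; rewrite ge_min lexx.
  by apply: (Amono (Order.min i j) j m0 _) Ay; rewrite ge_min lexx orbT.
have PF : ProperFilter F by apply: filter_from_proper => i /An.
have FK : F K by exists 1; [exact: ltr01 | exact: AK].
have [p [Kp Cp]] := cK F PF FK.
exists p; split => // e e0 B nB.
by apply: Cp => //; exists e.
Qed.

End Topo.

Definition P0 {R : realType} {X : pseudoMetricType R} (T Tinv : X -> X) (x y : X) :=
  forall e : R, 0 < e -> exists n, ball (iterz T Tinv n x) e (iterz T Tinv n y).

Definition sopen {R : realType} {X : pseudoMetricType R} (T Tinv : X -> X)
  (A : set X) := open A /\ (forall x y, P0 T Tinv x y -> A x -> A y).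

Definition satT {R : realType} {X : pseudoMetricType R} (T Tinv : X -> X) : Type := X.

HB.instance Definition _ (R : realType) (X : pseudoMetricType R) (T Tinv : X -> X) :=
  Choice.on (satT T Tinv).

Section SopenAx.
Context {R : realType} {X : pseudoMetricType R} (T Tinv : X -> X).
Lemma sopenT : sopen T Tinv setT.
Proof. by split => //; exact: openT. Qed.
Lemma sopenI : setI_closed (sopen T Tinv).
Proof.
move=> A B [oA sA] [oB sB]; split; first exact: openI.
by move=> x y Pxy [Ax Bx]; split; [exact: sA Ax|exact: sB Bx].
Qed.
Lemma sopen_bigU (I : Type) (f : I -> set X) :
  (forall i, sopen T Tinv (f i)) -> sopen T Tinv (\bigcup_i f i).
Proof.
move=> H; split; first by apply: bigcup_open => i _; case: (H i).
by move=> x y Pxy [i _ fx]; exists i => //; case: (H i) => _; apply; [exact: Pxy|].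
Qed.
End SopenAx.

HB.instance Definition _ (R : realType) (X : pseudoMetricType R) (T Tinv : X -> X) :=
  isOpenTopological.Build (satT T Tinv) (@sopenT R X T Tinv) (@sopenI R X T Tinv)
    (@sopen_bigU R X T Tinv).

Lemma satT_openE {R : realType} {X : pseudoMetricType R} (T Tinv : X -> X)
  (A : set (satT T Tinv)) : open A = sopen T Tinv A.
Proof. by []. Qed.

Definition PX {R : realType} (X : pseudoMetricType R) (x0 : X) : Type := X.
HB.instance Definition _ (R : realType) (X : pseudoMetricType R) (x0 : X) :=
  PseudoMetric.copy (PX x0) X.
HB.instance Definition _ (R : realType) (X : pseudoMetricType R) (x0 : X) :=
  isPointed.Build (PX x0) x0.

Lemma basis_ex {R : realType} (X : pseudoMetricType R) :
  compact [set: X] -> exists en : nat -> set X,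
    forall (x : X) (N : set X), nbhs x N -> exists n, en n x /\ en n `<=` N.
Proof.
move=> cX.
have [[x0 _]|nX] := pselect (exists x : X, True); last first.
  by exists (fun _ => set0) => x; case: nX; exists x.
have [B cB [Bo Bb]] := @compact_second_countable R (PX x0) cX.
have [g gs] := (pcard_surjP cB).
exists g => x N nN.
have := Bb x N nN.
move=> [U [BU Ux] UN].
have [n _ gnU] := gs U BU.
by exists n; rewrite gnU.
Qed.

Definition Jt := (nat * nat * int)%type.
Definition Rm {R : realType} : pseudoMetricType R := R^o.
Definition Wt (R : realType) : pseudoMetricType R := prod_topology (fun _ : Jt => @Rm R).

Lemma prod_cont {R : realType} {Tp : topologicalType} (h : Tp -> Wt R) :
  (forall i, continuous (fun x => h x i)) -> continuous h.
Proof.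
move=> ch x; apply/cvg_sup => i.
apply: (@continuous_comp_initial (Wt R) Tp _ (fun f : Wt R => f i) h (ch i)).
Qed.

Lemma Wt_hausdorff {R : realType} : hausdorff_space (Wt R).
Proof. apply: hausdorff_product => _. exact: Rhausdorff. Qed.

Lemma Wproj_cont {R : realType} (i : Jt) : continuous (fun w : Wt R => w i).
Proof. exact: proj_continuous. Qed.

Section Powd.
Context {R : realType}.

Lemma hausdorff_of_ball {M : pseudoMetricType R} :
  (forall x y : M, (forall e : R, 0 < e -> ball x e y) -> x = y) -> hausdorff_space M.
Proof.
move=> H p q; rewrite -closeEnbhs ball_close => Hb; apply: H => e e0.
exact: (Hb (PosNum e0)).
Qed.

Context {X : pseudoMetricType R} (d : nat).

Lemma powd_ballE (y z : powd X d) e : ball y e z <-> forall i, ball (y i) e (z i).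
Proof. by []. Qed.

Lemma powd_hausdorff : hausdorff_space X -> hausdorff_space (powd X d).
Proof.
move=> hX; apply: hausdorff_of_ball => y z H; apply/funext => i.
by apply: ball_eq => // e e0; exact: (H e e0 i).
Qed.

Lemma coord_cont (i : 'I_d) : continuous (fun y : powd X d => y i).
Proof.
move=> y N /nbhs_ex [e He]; apply: filterS (nbhsx_ballx y _ (gt0 e)).
by move=> z Bz; apply: He; exact: Bz.
Qed.

Lemma powd_cont {Y : topologicalType} (h : Y -> powd X d) :
  (forall i, continuous (fun y => h y i)) -> continuous h.
Proof.
move=> ch y N /nbhs_ex [e He].
apply: (@filterS _ _ _ [set z | forall i, ball (h y i) e%:num (h z i)]).
  by move=> z Hz; apply: He; exact/powd_ballE.
apply: filter_forall => i; apply: (ch i); exact: nbhsx_ballx.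
Qed.

Lemma powd_compact : compact [set: X] -> compact [set: powd X d].
Proof.
move=> cX.
have cP := @tychonoff _ (fun _ : 'I_d => X) (fun _ => [set: X]) (fun _ => cX).
have idc : continuous (fun y : prod_topology (fun _ : 'I_d => X) => (y : powd X d)).
  apply: powd_cont => i; exact: (@proj_continuous _ (fun _ : 'I_d => X) i).
have := continuous_compact (continuous_subspaceT idc) cP.
congr compact; apply/seteqP; split => // y _; by exists y.
Qed.

End Powd.

Section GdAct.
Context {R : realType} {X : pseudoMetricType R} (T Tinv : X -> X)
  (TK : cancel T Tinv) (TiK : cancel Tinv T) (d : nat).

Lemma gd_coord p q (y : powd X d) (i : 'I_d) :
  gd_act d T Tinv (p, q) y i = iterz T Tinv (p + (i.+1)%:Z * q) (y i).
Proof.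
rewrite /gd_act /=.
rewrite (@iterz_comm _ (sigma_d d T) (sigma_d d Tinv) _ T Tinv (fun y => y i)) //.
rewrite (@iterz_comm _ (tau_d d T) (tau_d d Tinv) _
  (iterz T Tinv (i.+1)%:Z) (iterz T Tinv (- (i.+1)%:Z)) (fun y => y i)) //.
by rewrite iterz_mul // -iterzD // mulrC.
Qed.

Lemma gd_comp g g' (y : powd X d) :
  gd_act d T Tinv g (gd_act d T Tinv g' y) = gd_act d T Tinv (g.1 + g'.1, g.2 + g'.2) y.
Proof.
case: g => p q; case: g' => p' q'; apply/funext => i /=.
rewrite !gd_coord -iterzD //; congr iterz; ring.
Qed.

Hypotheses (cT : continuous T) (cTi : continuous Tinv).

Lemma iterz_cont n : continuous (iterz T Tinv n).
Proof.
case: n => [k|k] /=.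
  elim: k => [|k IH] /=; first by move=> x; exact: cvg_id.
  move=> x; apply: continuous_comp; [exact: IH | exact: cT].
elim: k => [|k IH] /=; first exact: cTi.
move=> x; apply: continuous_comp; [exact: IH | exact: cTi].
Qed.

Lemma gd_cont g : continuous (gd_act d T Tinv g).
Proof.
case: g => p q; apply: powd_cont => i.
have -> : (fun y : powd X d => gd_act d T Tinv (p, q) y i) =
    iterz T Tinv (p + (i.+1)%:Z * q) \o (fun y : powd X d => y i).
  by apply/funext => y; rewrite gd_coord.
move=> y; apply: continuous_comp; [exact: coord_cont | exact: iterz_cont].
Qed.

Definition gen : set (powd X d) := [set y | exists (x : X) (p q : int),
  y = (fun i : 'I_d => iterz T Tinv (p + (i.+1)%:Z * q) x)].

Lemma NdE : Nd d T Tinv = closure gen.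
Proof. by []. Qed.

Lemma gen_inv g y : gen y -> gen (gd_act d T Tinv g y).
Proof.
case: g => p' q' [x [p [q ->]]]; exists x, (p' + p), (q' + q).
apply/funext => i; rewrite gd_coord -iterzD //; congr iterz; ring.
Qed.

Lemma closure_image {M N : pseudoMetricType R} (f : M -> N) (A : set M) :
  continuous f -> f @` closure A `<=` closure (f @` A).
Proof.
move=> cf _ [y cly <-]; apply/closure_ballP => e e0.
have [dl dl0 Hd] := cont_ball (cf y) e0.
have [a [Aa Ba]] := (iffLR (closure_ballP _ _)) cly _ dl0.
by exists (f a); split; [exists a | exact: Hd].
Qed.

Lemma Nd_inv g : gd_act d T Tinv g @` Nd d T Tinv `<=` Nd d T Tinv.
Proof.
move=> z /(closure_image (gd_cont (g := g))) cl; apply: (closureS _ cl).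
by move=> _ [y gy <-]; exact: gen_inv.
Qed.

Lemma Nd_compact : compact [set: X] -> compact (Nd d T Tinv).
Proof.
move=> cX; apply: (subclosed_compact _ (powd_compact (d:=d) cX)) => //.
exact: closed_closure.
Qed.

End GdAct.
Section Main.
Context {R : realType} {X : pseudoMetricType R} (T Tinv : X -> X).
Hypotheses (hX : hausdorff_space X) (cX : compact [set: X])
  (cT : continuous T) (cTi : continuous Tinv)
  (TK : cancel T Tinv) (TiK : cancel Tinv T).

Local Notation Tn := (iterz T Tinv).

Lemma ball2 {M : pseudoMetricType R} (a b c : M) (r e : R) :
  ball a r b -> ball b r c -> r + r <= e -> ball a e c.
Proof. by move=> h1 h2 le; apply: (le_ball le); apply: ball_triangle h1 h2. Qed.

Lemma ball3 {M : pseudoMetricType R} (a b c d : M) (r e : R) :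
  ball a r b -> ball b r c -> ball c r d -> r + r + r <= e -> ball a e d.
Proof.
move=> h1 h2 h3 le; apply: (le_ball le).
exact: ball_triangle (ball_triangle h1 h2) h3.
Qed.

Lemma Tn_cont n : continuous (Tn n).
Proof.
case: n => [k|k] /=.
  elim: k => [|k IH] /=; first by move=> x; exact: cvg_id.
  move=> x; apply: continuous_comp; [exact: IH | exact: cT].
elim: k => [|k IH] /=; first exact: cTi.
move=> x; apply: continuous_comp; [exact: IH | exact: cTi].
Qed.

Lemma Tn_inj n : injective (Tn n).
Proof.
move=> x y E.
by have := congr1 (Tn (- n)) E; rewrite -!iterzD // addNr.
Qed.

Local Notation Pr := (P0 T Tinv).

Lemma P0_refl x : Pr x x.
Proof. by move=> e e0; exists 0; exact: ballxx. Qed.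

Lemma P0_sym x y : Pr x y -> Pr y x.
Proof. by move=> H e e0; have [n Hn] := H e e0; exists n; exact: ball_sym. Qed.

Lemma P0_inv m x y : Pr x y -> Pr (Tn m x) (Tn m y).
Proof.
move=> H e e0; have [n Hn] := H e e0; exists (n - m).
by rewrite -!iterzD // subrK.
Qed.

Lemma P0_proxrel x y : Pr x y <-> proxrel T Tinv (x, y).
Proof.
split; last first.
  move=> H e e0; have [n [_ Hn]] := H e 0%N e0; by exists n.
move=> H e N e0 /=.
have [->|nxy] := pselect (x = y).
  by exists (Posz N); split => //; exact: ballxx.
have key : forall N : nat, exists2 e0 : R, 0 < e0 &
    forall n : int, (`|n| < N)%N -> ~ ball (Tn n x) e0 (Tn n y).
  elim=> [|M [e1 e10 IH]]; first by exists 1 => //.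
  have sep : forall n, exists2 e2 : R, 0 < e2 & ~ ball (Tn n x) e2 (Tn n y).
    move=> n.
    have : ~ (forall e, 0 < e -> ball (Tn n x) e (Tn n y)).
      by move=> Hb; apply: nxy; apply: (Tn_inj (n:=n)); exact: ball_eq.
    move=> /existsNP [e2 /not_implyP [e20 nb]]; by exists e2.
  have [e2 e20 nb2] := sep (Posz M).
  have [e3 e30 nb3] := sep (- Posz M).
  exists (Order.min e1 (Order.min e2 e3)); first by rewrite !lt_min e10 e20 e30.
  move=> n nM Hb.
  have [lt|eq] : (`|n| < M)%N \/ (`|n| = M)%N by lia.
    apply: (IH n lt); apply: le_ball Hb; by rewrite ge_min lexx.
  have [En|En] : n = Posz M \/ n = - Posz M by lia.
    by rewrite En in Hb; apply: nb2; apply: le_ball Hb; rewrite !ge_min lexx !orbT.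
  by rewrite En in Hb; apply: nb3; apply: le_ball Hb; rewrite !ge_min lexx !orbT.
have [e1 e10 He1] := key N.
have m0 : 0 < Order.min e e1 by rewrite lt_min e0 e10.
have [n Hn] := H _ m0.
exists n; split.
  rewrite leqNgt; apply/negP => lt; apply: (He1 n lt).
  by apply: le_ball Hn; rewrite ge_min lexx orbT.
by apply: le_ball Hn; rewrite ge_min lexx.
Qed.


Definition orb2 (x y : X) : set (X * X) := [set (Tn n x, Tn n y) | n in [set: int]].

Lemma transfer x y a b : closure (orb2 x y) (a, b) -> Pr a b -> Pr x y.
Proof.
move=> cl Pab e e0.
have e30 : 0 < e / 3 by rewrite divr_gt0.
have [m Hm] := Pab _ e30.
have ca : {for a, continuous (Tn m)} by apply: Tn_cont.
have cb : {for b, continuous (Tn m)} by apply: Tn_cont.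
have [d1 d10 Hd1] := cont_ball ca e30.
have [d2 d20 Hd2] := cont_ball cb e30.
have d0 : 0 < Order.min d1 d2 by rewrite lt_min d10 d20.
have [[u v] [[n _ [<- <-]] [B1 B2]]] := (iffLR (closure_ballP _ _)) cl _ d0.
exists (m + n); rewrite !iterzD //.
apply: (ball3 (ball_sym (Hd1 _ _)) Hm (Hd2 _ _)).
- by apply: le_ball B1; rewrite ge_min lexx.
- by apply: le_ball B2; rewrite ge_min lexx orbT.
- by rewrite -!mulr2n; lra.
Qed.

Lemma diag_P0 x y c : closure (orb2 x y) (c, c) -> Pr x y.
Proof. by move=> cl; apply: transfer cl (P0_refl c). Qed.

Hypothesis Pclosed : closed (proxrel T Tinv).

Lemma P0closed : closed [set uv : X * X | Pr uv.1 uv.2].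
Proof.
have -> : [set uv : X * X | Pr uv.1 uv.2] = proxrel T Tinv.
  by apply/seteqP; split => -[u v] /= H; apply/P0_proxrel.
exact: Pclosed.
Qed.

Lemma P0_closure (a b : X) :
  (forall d, 0 < d -> exists u v, [/\ Pr u v, ball a d u & ball b d v]) -> Pr a b.
Proof.
move=> H; apply: (@P0closed (a, b)); apply/closure_ballP => d d0.
by have [u [v [Puv B1 B2]]] := H d d0; exists (u, v).
Qed.

Lemma P0_trans x y z : Pr x y -> Pr y z -> Pr x z.
Proof.
move=> Pxy Pyz.
have cXXX : compact [set: X * X * X].
  by rewrite -!setXTT; apply: compact_setX => //; apply: compact_setX.
pose A e := [set ((Tn n x, Tn n y), Tn n z) | n in [set n | ball (Tn n x) e (Tn n y)]].
have [[[a a'] c] [_ Hcl]] := @cluster_family R _ [set: X * X * X] A cXXX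
  (fun _ _ _ _ => I)
  (fun e e0 => let: ex_intro n Hn := Pxy e e0 in
     ex_intro _ ((Tn n x, Tn n y), Tn n z) (ex_intro2 _ _ n Hn erefl))
  (fun e1 e2 e10 le _ '(ex_intro2 n Hn E) => ex_intro2 _ _ n (le_ball le Hn) E).
have aa : a = a'.
  apply: ball_eq => // e e0.
  have e30 : 0 < e / 3 by rewrite divr_gt0.
  have [w [[n Hn <-] [[B1 B2] _]]] := (iffLR (closure_ballP _ _)) (Hcl _ e30) _ e30.
  apply: (ball3 B1 Hn (ball_sym B2)); by rewrite -!mulr2n; lra.
subst a'.
have Pac : Pr a c.
  apply: P0_closure => d d0.
  have [w [[n Hn <-] [[B1 B2] B3]]] := (iffLR (closure_ballP _ _)) (Hcl _ ltr01) _ d0.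
  exists (Tn n y), (Tn n z); split => //; exact: P0_inv.
apply: (transfer (a := a) (b := c)) => //.
apply/closure_ballP => d d0.
have [w [[n Hn <-] [[B1 B2] B3]]] := (iffLR (closure_ballP _ _)) (Hcl _ ltr01) _ d0.
by exists (Tn n x, Tn n z); split => //; exists n.
Qed.

Definition sat (K : set X) : set X := [set y | exists2 x, K x & Pr x y].

Lemma sat_closed K : closed K -> closed (sat K).
Proof.
move=> Kcl y /closure_ballP cly.
pose A e := [set x | K x /\ exists y', ball y e y' /\ Pr x y'].
have [xs [_ Hcl]] := @cluster_family R _ [set: X] A cX
  (fun _ _ _ _ => I)
  (fun e e0 => let: ex_intro y' (conj (ex_intro2 x Kx Pxy') By') := cly e e0 in
     ex_intro _ x (conj Kx (ex_intro _ y' (conj By' Pxy'))))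
  (fun e1 e2 e10 le x '(conj Kx (ex_intro y' (conj By' Pxy'))) =>
      conj Kx (ex_intro _ y' (conj (le_ball le By') Pxy'))).
exists xs.
  apply: Kcl; apply/closure_ballP => d d0.
  have [x [[Kx _] Bx]] := (iffLR (closure_ballP _ _)) (Hcl _ ltr01) _ d0.
  by exists x.
apply: P0_closure => d d0.
have [x [[Kx [y' [By' Pxy']]] Bx]] := (iffLR (closure_ballP _ _)) (Hcl _ d0) _ d0.
by exists x, y'.
Qed.


Definition satd (A : set X) := forall x y, Pr x y -> A x -> A y.

Lemma sat_satd K : satd (sat K).
Proof. by move=> x y Pxy [z Kz Pzx]; exists z => //; exact: P0_trans Pxy. Qed.

Lemma satd_C A : satd A -> satd (~` A).
Proof. by move=> sA x y Pxy nAx Ay; apply: nAx; apply: sA Ay; exact: P0_sym. Qed.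

Lemma sat_sub K : K `<=` sat K.
Proof. by move=> x Kx; exists x => //; exact: P0_refl. Qed.

Lemma satT_closedE (A : set X) :
  closed (A : set (satT T Tinv)) <-> closed A /\ satd A.
Proof.
rewrite -openC satT_openE /sopen -openC; split.
  move=> [oA sA]; split => //; rewrite -[A]setCK; exact: satd_C.
by move=> [oA sA]; split => //; exact: satd_C.
Qed.

Lemma satT_normal : normal_space (satT T Tinv).
Proof.
apply/(@normal_openP R) => A B /satT_closedE [clA sA] /satT_closedE [clB sB] AB0.
have [U0 [V0 [oU oV AU BV UV]]] :=
  (iffLR (@normal_openP R X)) pseudometric_normal A B clA clB AB0.
have key : forall (C U : set X), open U -> satd C -> C `<=` U ->
    [/\ open (~` sat (~` U) : set (satT T Tinv)), C `<=` ~` sat (~` U)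
      & ~` sat (~` U) `<=` U].
  move=> C U oU' sC CU; split.
  - rewrite satT_openE; split; last exact/satd_C/sat_satd.
    by apply: closed_openC; apply: sat_closed; exact: open_closedC.
  - move=> c Cc [u nUu Puc]; apply: nUu; apply: CU; apply: sC Cc.
    exact: P0_sym.
  - by move=> x nx; apply: contrapT => nUx; apply: nx; exact: sat_sub.
have [k1 k2 k3] := key A U0 oU sA AU.
have [k4 k5 k6] := key B V0 oV sB BV.
exists (~` sat (~` U0)), (~` sat (~` V0)); split => //.
rewrite -subset0 => x [/k3 Ux /k6 Vx].
have : (U0 `&` V0) x by split.
by rewrite UV.
Qed.

Lemma ury (A B : set X) : closed A -> closed B -> satd A -> satd B ->
  A `&` B = set0 ->
  exists f : X -> R^o, [/\ continuous f, (forall x y, Pr x y -> f x = f y),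
    (forall x, A x -> f x = 0) & (forall x, B x -> f x = 1)].
Proof.
move=> clA clB sA sB AB0.
have clA' : closed (A : set (satT T Tinv)) by apply/satT_closedE.
have clB' : closed (B : set (satT T Tinv)) by apply/satT_closedE.
have := (iffLR (@normal_separatorP R (satT T Tinv))) satT_normal A B clA' clB' AB0.
move/(@uniform_separatorP (satT T Tinv) R) => [f [cf _ fA fB]].
have nb : forall (x : X) (N : set R^o), nbhs (f x : R^o) N ->
    exists U : set X, [/\ open U, satd U, U x & U `<=` f @^-1` N].
  move=> x N nN; have [U [[oU sU] Ux UN]] := cf x N nN.
  by exists U.
exists f; split.
- move=> x N nN; have [U [oU _ Ux UN]] := nb x N nN.
  by apply: filterS UN _; exact: open_nbhs_nbhs.
- move=> x y Pxy; apply: ball_eq; first exact: Rhausdorff.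
  move=> e e0; have [U [oU sU Ux UN]] := nb x _ (nbhsx_ballx (f x : R^o) _ e0).
  exact: UN (sU _ _ Pxy Ux).
- by move=> x Ax; have := fA (f x) (ex_intro2 _ _ x Ax erefl).
- by move=> x Bx; have := fB (f x) (ex_intro2 _ _ x Bx erefl).
Qed.

Variable en : nat -> set X.
Hypothesis hen : forall (x : X) (N : set X), nbhs x N -> exists n, en n x /\ en n `<=` N.

Definition famP (n m : nat) (f : X -> R^o) :=
  [/\ continuous f, (forall x y, Pr x y -> f x = f y),
      (forall x, sat (closure (en n)) x -> f x = 0) &
      (forall x, sat (closure (en m)) x -> f x = 1)].

Definition fam n m : X -> R^o :=
  match pselect (exists f, famP n m f) with
  | left H => projT1 (cid H)
  | right _ => fun _ => 0
  end.

Lemma fam_prop n m : (exists f, famP n m f) -> famP n m (fam n m).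
Proof.
rewrite /fam; case: pselect => // H _; exact: (projT2 (cid H)).
Qed.

Lemma fam_cont n m : continuous (fam n m).
Proof.
rewrite /fam; case: pselect => H; first by have [] := projT2 (cid H).
by move=> x; exact: cvg_cst.
Qed.

Lemma fam_inv n m x y : Pr x y -> fam n m x = fam n m y.
Proof.
rewrite /fam; case: pselect => H //; have [_ h _ _] := projT2 (cid H); exact: h.
Qed.

Lemma fam_sep a b : (forall n m, fam n m a = fam n m b) -> Pr a b.
Proof.
move=> H; apply: P0_closure => d d0.
have d2 : 0 < d / 2 by rewrite divr_gt0.
have [n [ena ensub]] := hen (nbhsx_ballx a _ d2).
have [m [emb emsub]] := hen (nbhsx_ballx b _ d2).
pose S := sat (closure (en n)) `&` sat (closure (en m)).
have [z [[u clu Puz] [v clv Pvz]]] : exists z, S z.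
  apply: contrapT => nz.
  have S0 : S = set0 by apply/seteqP; split => // z Sz; apply: nz; exists z.
  have ex : exists f, famP n m f.
    apply: ury => //; try exact: sat_satd.
    - by apply: sat_closed; exact: closed_closure.
    - by apply: sat_closed; exact: closed_closure.
  have [_ _ f0 f1] := fam_prop ex.
  have := H n m; rewrite f0; last by apply: sat_sub; exact: (subset_closure ena).
  rewrite f1; last by apply: sat_sub; exact: (subset_closure emb).
  by move/eqP; rewrite eq_sym oner_eq0.
exists u, v; split.
- exact: P0_trans Puz (P0_sym Pvz).
- have [w [enw Bw]] := (iffLR (closure_ballP _ _)) clu _ d2.
  apply: (ball2 (ensub _ enw) (ball_sym Bw)); by rewrite -mulr2n; lra.
- have [w [emw Bw]] := (iffLR (closure_ballP _ _)) clv _ d2.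
  apply: (ball2 (emsub _ emw) (ball_sym Bw)); by rewrite -mulr2n; lra.
Qed.

Definition hW (x : X) : Wt R := fun j => fam j.1.1 j.1.2 (Tn j.2 x).
Definition aW (k : int) (w : Wt R) : Wt R := fun j => w (j.1, j.2 + k).

Lemma hW_equiv k x : hW (Tn k x) = aW k (hW x).
Proof. by apply/funext => j; rewrite /hW /aW /= -iterzD. Qed.

Lemma hW_cont : continuous hW.
Proof.
apply: prod_cont => j x; rewrite /hW.
apply: continuous_comp; [exact: Tn_cont | exact: fam_cont].
Qed.

Lemma aW_cont k : continuous (aW k).
Proof. by apply: prod_cont => j; exact: (@Wproj_cont R (j.1, j.2 + k)). Qed.

Let C := range hW.

Lemma Csys : system_on aW C.
Proof.
split.
- exact: Wt_hausdorff.
- exact: continuous_compact (continuous_subspaceT hW_cont) cX.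
- move=> g; apply: continuous_subspaceT; exact: aW_cont.
- by move=> g _ [w [x _ <-] <-]; exists (Tn g x) => //; rewrite hW_equiv.
Qed.

Lemma Cfactor : factor_map (zact T Tinv) [set: X] aW C hW.
Proof.
split => //.
- exact: continuous_subspaceT hW_cont.
- by move=> g x _; rewrite /zact hW_equiv.
Qed.

Lemma Cdistal : distal_on aW C.
Proof.
move=> _ _ [x _ <-] [y _ <-] prox.
suff Pxy : Pr x y.
  by apply/funext => j; rewrite /hW; apply: fam_inv; exact: P0_inv.
have cXX : compact [set: X * X] by rewrite -setXTT; exact: compact_setX.
pose A e := [set (Tn k x, Tn k y) | k in [set k | ball (aW k (hW x)) e (aW k (hW y))]].
have [[a b] [_ Hcl]] := @cluster_family R _ [set: X * X] A cXX
  (fun _ _ _ _ => I)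
  (fun e e0 => let: ex_intro k Hk := prox e e0 in
     ex_intro _ (Tn k x, Tn k y) (ex_intro2 _ _ k Hk erefl))
  (fun e1 e2 e10 le _ '(ex_intro2 k Hk E) => ex_intro2 _ _ k (le_ball le Hk) E).
have hab : hW a = hW b.
  apply: ball_eq; first exact: Wt_hausdorff.
  move=> e e0; have e3 : 0 < e / 3 by rewrite divr_gt0.
  have ca : {for a, continuous hW} by apply: hW_cont.
  have cb : {for b, continuous hW} by apply: hW_cont.
  have [d1 d10 Hd1] := cont_ball ca e3.
  have [d2 d20 Hd2] := cont_ball cb e3.
  have d0 : 0 < Order.min d1 d2 by rewrite lt_min d10 d20.
  have [w [[k Hk <-] [B1 B2]]] := (iffLR (closure_ballP _ _)) (Hcl _ e3) _ d0.
  have Hk' : ball (hW (Tn k x)) (e / 3) (hW (Tn k y)) by rewrite !hW_equiv; exact: Hk.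
  apply: (ball3 (Hd1 _ _) Hk' (ball_sym (Hd2 _ _))).
  - by apply: le_ball B1; rewrite ge_min lexx.
  - by apply: le_ball B2; rewrite ge_min lexx orbT.
  - by rewrite -!mulr2n; lra.
have Pab : Pr a b.
  apply: fam_sep => n m.
  by have := congr1 (fun w : Wt R => w ((n, m), 0)) hab.
apply: (transfer (a := a) (b := b)) => //.
apply/closure_ballP => d d0.
have [w [[k Hk <-] [B1 B2]]] := (iffLR (closure_ballP _ _)) (Hcl _ ltr01) _ d0.
by exists (Tn k x, Tn k y); split => //; exists k.
Qed.

Lemma Rpi {Xd : pseudoMetricType R} (S Sinv : Xd -> Xd) (pi : X -> Xd) :
  max_distal_factor (zact T Tinv) [set: X] (zact S Sinv) [set: Xd] pi ->
  forall x x', pi x = pi x' -> Pr x x'.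
Proof.
move=> [_ _ _ univ] x x' E.
have [k [_ hk]] := univ (Wt R) aW C hW Csys Cfactor Cdistal.
have hx : hW x = hW x' by rewrite !hk // E.
apply: fam_sep => n m.
by have := congr1 (fun w : Wt R => w ((n, m), 0)) hx.
Qed.

Variable d : nat.
Local Notation gd := (gd_act d T Tinv).

Definition orbd (y y' : powd X d) : set (powd X d * powd X d) :=
  [set (gd g y, gd g y') | g in [set: int * int]].

Lemma orbd_trans y y' a b : closure (orbd y y') (a, b) ->
  closure (orbd a b) `<=` closure (orbd y y').
Proof.
move=> clab p /closure_ballP clp; apply/closure_ballP => e e0.
have e2 : 0 < e / 2 by rewrite divr_gt0.
have [w [[g _ <-] [B1 B2]]] := clp _ e2.
have ca : {for a, continuous (gd g)} by apply: (gd_cont TK TiK cT cTi).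
have cb : {for b, continuous (gd g)} by apply: (gd_cont TK TiK cT cTi).
have [d1 d10 Hd1] := cont_ball ca e2.
have [d2 d20 Hd2] := cont_ball cb e2.
have d0 : 0 < Order.min d1 d2 by rewrite lt_min d10 d20.
have [w' [[g' _ <-] [C1 C2]]] := (iffLR (closure_ballP _ _)) clab _ d0.
exists (gd g (gd g' y), gd g (gd g' y')); split.
  by exists (g.1 + g'.1, g.2 + g'.2) => //; rewrite !(gd_comp TK TiK).
split.
- apply: (ball2 B1 (Hd1 _ _)); last by rewrite -mulr2n; lra.
  by apply: le_ball C1; rewrite ge_min lexx.
- apply: (ball2 B2 (Hd2 _ _)); last by rewrite -mulr2n; lra.
  by apply: le_ball C2; rewrite ge_min lexx orbT.
Qed.

Lemma gd_n0 n (y : powd X d) i : gd (n, 0) y i = Tn n (y i).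
Proof. by rewrite (gd_coord TK TiK) mulr0 addr0. Qed.

Lemma d_diag_k k : forall y y' : powd X d, (forall i, Pr (y i) (y' i)) ->
  (forall i : 'I_d, (k <= i)%N -> y i = y' i) -> exists c, closure (orbd y y') (c, c).
Proof.
elim: k => [|k IH] y y' Py Ey.
  have -> : y' = y by apply/funext => i; rewrite Ey.
  exists y; apply: subset_closure; by exists (0, 0).
have [kd|dk] := ltnP k d; last first.
  apply: IH => // i ki; apply: Ey; have := ltn_ord i; lia.
pose i0 : 'I_d := Ordinal kd.
have cYY : compact [set: powd X d * powd X d].
  by rewrite -setXTT; apply: compact_setX; exact: powd_compact.
pose A e := [set (gd (n, 0) y, gd (n, 0) y') |
  n in [set n | ball (Tn n (y i0)) e (Tn n (y' i0))]].
have [[a b] [_ Hcl]] := @cluster_family R _ [set: powd X d * powd X d] A cYY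
  (fun _ _ _ _ => I)
  (fun e e0 => let: ex_intro n Hn := Py i0 e e0 in
     ex_intro _ (gd (n, 0) y, gd (n, 0) y') (ex_intro2 _ _ n Hn erefl))
  (fun e1 e2 e10 le _ '(ex_intro2 n Hn E) => ex_intro2 _ _ n (le_ball le Hn) E).
have clab : closure (orbd y y') (a, b).
  apply/closure_ballP => e e0.
  have [w [[n _ <-] Bw]] := (iffLR (closure_ballP _ _)) (Hcl _ ltr01) _ e0.
  by exists (gd (n, 0) y, gd (n, 0) y'); split => //; exists (n, 0).
have [c Hc] : exists c, closure (orbd a b) (c, c).
  apply: IH.
  - move=> i; apply: P0_closure => e e0.
    have [w [[n _ <-] [B1 B2]]] := (iffLR (closure_ballP _ _)) (Hcl _ ltr01) _ e0.
    exists (gd (n, 0) y i), (gd (n, 0) y' i); split; [|exact: B1 i|exact: B2 i].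
    have h := P0_inv n (Py i); rewrite -!gd_n0 in h; exact: h.
  - move=> i ki; apply: ball_eq => // e e0.
    have e3 : 0 < e / 3 by rewrite divr_gt0.
    have [w [[n Hn <-] [B1 B2]]] := (iffLR (closure_ballP _ _)) (Hcl _ e3) _ e3.
    have [Ei|lt] : i = i0 \/ (k < i)%N.
      have [lt|ge] := ltnP k i; first by right.
      by left; apply: val_inj => /=; apply/eqP; rewrite eqn_leq ge ki.
    + apply: (ball3 (B1 i) _ (ball_sym (B2 i))); last by rewrite -!mulr2n; lra.
      have h : ball (Tn n (y i)) (e / 3) (Tn n (y' i)) by rewrite Ei.
      by rewrite -!gd_n0 in h; exact: h.
    + apply: (ball3 (B1 i) _ (ball_sym (B2 i))); last by rewrite -!mulr2n; lra.
      have h : ball (Tn n (y i)) (e / 3) (Tn n (y' i)) by rewrite Ey //; exact: ballxx.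
      by rewrite -!gd_n0 in h; exact: h.
exists c; exact: (orbd_trans clab Hc).
Qed.

Lemma d_diag (y y' : powd X d) : (forall i, Pr (y i) (y' i)) ->
  exists c, closure (orbd y y') (c, c).
Proof. by move=> Py; apply: (d_diag_k (k := d)) => // i; rewrite leqNgt ltn_ord. Qed.

Lemma cont_within {M : pseudoMetricType R} {N : topologicalType} (A : set M)
  (f : M -> N) : {within A, continuous f} -> forall x, A x -> forall V,
  nbhs (f x) V -> exists2 del : R, 0 < del & forall y, A y -> ball x del y -> V (f y).
Proof.
move=> /subspace_continuousP cf x Ax V nV.
have := cf x Ax V nV; rewrite /within /= => /nbhs_ex [del H].
by exists del%:num => // y Ay Bxy; exact: H Bxy Ay.
Qed.

Lemma within_of_ball {M : pseudoMetricType R} {N : topologicalType} (A : set M)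
  (f : M -> N) : (forall x, A x -> forall V, nbhs (f x) V ->
    exists2 del : R, 0 < del & forall y, A y -> ball x del y -> V (f y)) ->
  {within A, continuous f}.
Proof.
move=> H; apply/subspace_continuousP => x Ax V nV.
have [del del0 Hd] := H x Ax V nV.
rewrite /within /=; apply: filterS (nbhsx_ballx x _ del0) => y Bxy Ay.
exact: Hd.
Qed.

Lemma main_result {Xd : pseudoMetricType R} (S Sinv : Xd -> Xd) (pi : X -> Xd)
  (cS : continuous S) (cSi : continuous Sinv) (SK : cancel S Sinv) (SiK : cancel Sinv S)
  (hmax : max_distal_factor (zact T Tinv) [set: X] (zact S Sinv) [set: Xd] pi) :
  max_distal_factor (gd_act d T Tinv) (Nd d T Tinv) (gd_act d S Sinv) (Nd d S Sinv)
    (powmap d pi).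
Proof.
have [[hXd cXd _ _] [cpi pisurj piequiv] dXd _] := hmax.
have cpi' : continuous pi by apply/continuous_subspace_setT.
have piE : forall n x, pi (Tn n x) = iterz S Sinv n (pi x).
  by move=> n x; exact: piequiv.
have pmc : continuous (powmap d pi).
  apply: powd_cont => i y; apply: continuous_comp; [exact: coord_cont | exact: cpi'].
have pm_equiv : forall g y, powmap d pi (gd g y) = gd_act d S Sinv g (powmap d pi y).
  move=> [p q] y; apply/funext => i.
  by rewrite /powmap (gd_coord TK TiK) (gd_coord SK SiK) piE.
have pm_gen : powmap d pi @` @gen R X T Tinv d `<=` @gen R Xd S Sinv d.
  move=> _ [y [x [p [q ->]]] <-]; exists (pi x), p, q.
  by apply/funext => i; rewrite /powmap piE.
have cNX : compact (Nd d T Tinv) by exact: Nd_compact.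
have clNX : closed (Nd d T Tinv) by exact: closed_closure.
have img : powmap d pi @` Nd d T Tinv = Nd d S Sinv.
  apply/seteqP; split.
    by move=> z /(closure_image pmc) cl; exact: (closureS pm_gen cl).
  have clI : closed (powmap d pi @` Nd d T Tinv).
    apply: compact_closed; first exact: powd_hausdorff.
    exact: continuous_compact (continuous_subspaceT pmc) cNX.
  move=> z clz; apply: clI; apply: (closureS _ clz) => y [x [p [q ->]]].
  have : [set: Xd] x by []; rewrite -pisurj => -[x' _ <-].
  exists (fun i : 'I_d => Tn (p + (i.+1)%:Z * q) x').
    by apply: subset_closure; exists x', p, q.
  by apply/funext => i; rewrite /powmap piE.
split.
- split.
  + exact: powd_hausdorff.
  + exact: Nd_compact.
  + move=> g; apply: continuous_subspaceT; exact: (gd_cont SK SiK cS cSi).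
  + move=> g; exact: (Nd_inv SK SiK cS cSi).
- split.
  + exact: continuous_subspaceT pmc.
  + exact: img.
  + by move=> g y _; exact: pm_equiv.
- move=> y y' _ _ prox; apply/funext => i; apply: dXd => //.
  move=> e e0; have [[p q] Hg] := prox e e0; exists (p + (i.+1)%:Z * q).
  by have := Hg i; rewrite !(gd_coord SK SiK).
move=> W actW Cw h [hW cC _ _] [ch hC hequiv] dC.
have key : forall y y', Nd d T Tinv y -> Nd d T Tinv y' ->
    powmap d pi y = powmap d pi y' -> h y = h y'.
  move=> y y' Ny Ny' E.
  have Py : forall i, Pr (y i) (y' i).
    by move=> i; apply: (Rpi hmax); exact: (congr1 (fun z => z i) E).
  have [c clc] := d_diag Py.
  have Nc : Nd d T Tinv c.
    apply: clNX; apply/closure_ballP => e e0.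
    have [w [[g _ <-] [B1 _]]] := (iffLR (closure_ballP _ _)) clc _ e0.
    by exists (gd g y); split => //; apply: (Nd_inv TK TiK cT cTi); exists y.
  apply: dC; [by rewrite -hC; exists y | by rewrite -hC; exists y' |].
  move=> e e0; have e2 : 0 < e / 2 by rewrite divr_gt0.
  have [del del0 Hdel] := cont_within ch Nc (nbhsx_ballx (h c) _ e2).
  have [w [[g _ <-] [B1 B2]]] := (iffLR (closure_ballP _ _)) clc _ del0.
  have Ngy : Nd d T Tinv (gd g y) by apply: (Nd_inv TK TiK cT cTi); exists y.
  have Ngy' : Nd d T Tinv (gd g y') by apply: (Nd_inv TK TiK cT cTi); exists y'.
  exists g; rewrite -!hequiv //.
  apply: (ball2 (ball_sym (Hdel _ Ngy B1)) (Hdel _ Ngy' B2)).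
  by rewrite -mulr2n; lra.
have pre_ex : forall z : powd Xd d, exists y : powd X d,
    powmap d pi y = z /\ (Nd d S Sinv z -> Nd d T Tinv y).
  move=> z; have [Nz|nNz] := pselect (Nd d S Sinv z).
    by move: Nz; rewrite -img => -[y Ny <-]; exists y.
  have hz : forall i, exists x, pi x = z i.
    by move=> i; have : [set: Xd] (z i) by []; rewrite -pisurj => -[x _ <-]; exists x.
  exists (fun i => projT1 (cid (hz i))); split => //.
  by apply/funext => i; exact: (projT2 (cid (hz i))).
pose pre z := projT1 (cid (pre_ex z)).
have preE z : powmap d pi (pre z) = z by have [] := projT2 (cid (pre_ex z)).
have preN z : Nd d S Sinv z -> Nd d T Tinv (pre z).
  by have [] := projT2 (cid (pre_ex z)).
exists (fun z => h (pre z)); split; last first.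
  move=> y Ny; apply: (key _ _ Ny _ (esym (preE _))).
  by apply: preN; rewrite -img; exists y.
split.
- apply: within_of_ball => z Nz V nV.
  apply: contrapT => nex.
  have bad : forall del : R, 0 < del ->
      exists z', [/\ Nd d S Sinv z', ball z del z' & ~ V (h (pre z'))].
    move=> del del0; apply: contrapT => nb; apply: nex; exists del => // z' Nz' Bz'.
    by apply: contrapT => nV'; apply: nb; exists z'.
  pose A (del : R) := [set pre z' | z' in
    [set z' | [/\ Nd d S Sinv z', ball z del z' & ~ V (h (pre z'))]]].
  have Asub : forall e, 0 < e -> A e `<=` Nd d T Tinv.
    by move=> e e0 _ [z' [Nz' _ _] <-]; exact: preN.
  have Ane : forall e, 0 < e -> A e !=set0.
    by move=> e e0; have [z' Hz'] := bad e e0; exists (pre z'), z'.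
  have Amono : forall e1 e2, 0 < e1 -> e1 <= e2 -> A e1 `<=` A e2.
    move=> e1 e2 e10 le _ [z' [Nz' Bz' nV'] <-]; exists z' => //; split => //.
    exact: le_ball Bz'.
  have [ys [Nys Hcl]] := @cluster_family R _ (Nd d T Tinv) A cNX Asub Ane Amono.
  have pys : powmap d pi ys = z.
    apply: ball_eq; first exact: powd_hausdorff.
    move=> e e0; have e2 : 0 < e / 2 by rewrite divr_gt0.
    have [del del0 Hdel] := cont_ball (pmc ys) e2.
    have [w [[z' [Nz' Bz' _] <-] Bw]] := (iffLR (closure_ballP _ _)) (Hcl _ e2) _ del0.
    have := Hdel _ Bw; rewrite preE => B'.
    by apply: (ball2 B' (ball_sym Bz')); rewrite -mulr2n; lra.
  have hys : h ys = h (pre z).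
    by apply: (key _ _ Nys _ (etrans pys (esym (preE _)))); exact: preN.
  have nV' : nbhs (h ys) V by rewrite hys.
  have [del del0 Hdel] := cont_within ch Nys nV'.
  have [w [[z' [Nz' _ nVz'] <-] Bw]] := (iffLR (closure_ballP _ _)) (Hcl _ ltr01) _ del0.
  by apply: nVz'; apply: Hdel => //; exact: preN.
- apply/seteqP; split.
    by move=> _ [z Nz <-]; rewrite -hC; exists (pre z) => //; exact: preN.
  move=> c; rewrite -hC => -[y Ny <-].
  exists (powmap d pi y); first by rewrite -img; exists y.
  symmetry; apply: (key _ _ Ny _ (esym (preE _))).
  by apply: preN; rewrite -img; exists y.
- move=> g z Nz /=.
  have Ngz : Nd d S Sinv (gd_act d S Sinv g z).
    by apply: (Nd_inv SK SiK cS cSi); exists z.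
  rewrite -hequiv; last exact: preN.
  apply: (key _ _ (preN _ Ngz)).
  + by apply: (Nd_inv TK TiK cT cTi); exists (pre z) => //; exact: preN.
  + by rewrite pm_equiv !preE.
Qed.
End Main.

Unset Implicit Arguments.

Theorem theorem4p2 (R : realType) (X Xdis : pseudoMetricType R)
  (T Tinv : X -> X) (S Sinv : Xdis -> Xdis) (pi : X -> Xdis) (d : nat) :
  (* (X,T) is a topological dynamical system: compact metric, T homeomorphism *)
  hausdorff_space X -> compact [set: X] ->
  continuous T -> continuous Tinv -> cancel T Tinv -> cancel Tinv T ->
  (* S is the induced homeomorphism on X_dis *)
  continuous S -> continuous Sinv -> cancel S Sinv -> cancel Sinv S ->
  (* minimal, with closed proximal relation *)
  minimal_sys T ->
  closed (@proxrel R X T Tinv) ->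
  (* pi : (X,T) -> (X_dis,S) is the maximal distal factor *)
  max_distal_factor (zact T Tinv) [set: X] (zact S Sinv) [set: Xdis] pi ->
  (* conclusion *)
  max_distal_factor (gd_act d T Tinv) (Nd d T Tinv)
                    (gd_act d S Sinv) (Nd d S Sinv) (powmap d pi).
Proof.
move=> hX cX cT cTi TK TiK cS cSi SK SiK _ Pcl hmax.
have [en hen] := basis_ex cX.
exact: (main_result hX cX cT cTi TK TiK Pcl hen d cS cSi SK SiK hmax).
Qed.
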